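(* Let $\boldsymbol\varphi$ be a random variable whose distribution is determined by a parameter $\theta\in\Theta\subseteq\mathbb{R}$, and let $I_{\boldsymbol\varphi}$ denote the support of $\boldsymbol\varphi$. Let $\mathbb{F}(\cdot,\cdot)$ and $\mathbb{G}(\cdot,\cdot)$ be bivariate functions such that: (i) for each $z\in I_{\boldsymbol\varphi}$, $\mathbb{F}(z,\vartheta)$ is non-increasing in $\vartheta\ge z$; (ii) for each $z\in I_{\boldsymbol\varphi}$, $\mathbb{G}(z,\vartheta)$ is non-decreasing in $\vartheta\le z$; (iii) $\Pr\{\boldsymbol\varphi\le z\mid\theta\}\le\mathbb{F}(z,\theta)$ for $z$ no greater than $\theta\in\Theta$, and $\Pr\{\boldsymbol\varphi\ge z\mid\theta\}\le\mathbb{G}(z,\theta)$ for $z$ no less than $\theta\in\Theta$. Let $\delta\in(0,1)$, and let $L(\boldsymbol\varphi,\delta)$ and $U(\boldsymbol\varphi,\delta)$ be functions of $\boldsymbol\varphi$ and $\delta$ such that the event $$\Big\{\mathbb{F}(\boldsymbol\varphi,U(\boldsymbol\varphi,\delta))\le\tfrac\delta2,\ \mathbb{G}(\boldsymbol\varphi,L(\boldsymbol\varphi,\delta))\le\tfrac\delta2,\ L(\boldsymbol\varphi,\delta)\le\boldsymbol\varphi\le U(\boldsymbol\varphi,\delta)\Big\}$$ is a sure event. Then $\Pr\{L(\boldsymbol\varphi,\delta)\le\theta\le U(\boldsymbol\varphi,\delta)\mid\theta\}\ge1-\delta$ for every $\theta\in\Theta$.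
   Context: $\Pr\{\cdot\mid\theta\}$ denotes probability when the distribution of $\boldsymbol\varphi$ has parameter $\theta$. *)

(* Defs.v *)
From HB Require Import structures.
From mathcomp Require Import all_boot all_order all_algebra.
From mathcomp Require Import all_classical all_reals all_analysis.
Set Implicit Arguments. Unset Strict Implicit. Unset Printing Implicit Defensive.

(* Main.v *)
Require Import Defs.
From HB Require Import structures.
From mathcomp Require Import all_boot all_order all_algebra.
From mathcomp Require Import all_classical all_reals all_analysis.
Import Order.TTheory GRing.Theory Num.Theory.
Local Open Scope classical_set_scope.
Local Open Scope ring_scope.

Section K.
Context (d : measure_display) (T : measurableType d) (R : realType).
Variable (mu : probability T R) (f : T -> R).
Hypothesis mf : measurable_fun setT f.

Lemma mle (z : R) : measurable [set w | f w <= z].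
Proof.
have := mf measurableT _ (measurable_itv `]-oo, z]).
idtac.
rewrite setTI; congr measurable; apply/seteqP; split => w /=; by rewrite in_itv /=.
Qed.

Lemma mge (z : R) : measurable [set w | z <= f w].
Proof.
have := mf measurableT _ (measurable_itv `[z, +oo[).
rewrite setTI; congr measurable; apply/seteqP; split => w /=; by rewrite in_itv /= andbT.
Qed.

Lemma union_bound (t : nat -> R) (c : R) (A : set T) :
  (forall n m, (n <= m)%N -> t n <= t m) ->
  measurable A -> A `<=` \bigcup_n [set w | f w <= t n] ->
  (forall n, (mu [set w | (f w <= t n)%R] <= c%:E)%E) -> (mu A <= c%:E)%E.
Proof.
move=> ht mA hA hc.
have mU : measurable (\bigcup_n [set w | f w <= t n]).
  by apply: bigcupT_measurable => n; exact: mle.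
apply: (le_trans (le_measure _ _ _ hA)); rewrite ?inE //.
have h := @nondecreasing_cvg_mu _ _ _ mu _ (fun n => mle (t n)) mU _.
have nd : nondecreasing_seq (fun n => [set w | f w <= t n]).
  by move=> n m nm; apply/subsetPset => w /= fw; apply: le_trans fw (ht _ _ nm).
move: (h nd) => cv.
apply: (@le_trans _ _ (lim ((mu \o (fun n => [set w | (f w <= t n)%R])) @ \oo))).
  rewrite le_eqVlt; apply/orP; left; apply/eqP/esym; apply: cvg_lim => //; exact: cv.
apply: lime_le; first by apply/cvg_ex; eexists; exact: cv.
by apply: nearW => n; exact: hc.
Qed.

Lemma key (S : set R) (c : R) (A : set T) : 0 <= c -> measurable A ->
  A `<=` f @^-1` S ->
  (forall z, S z -> (mu [set w | (f w <= z)%R] <= c%:E)%E) -> (mu A <= c%:E)%E.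
Proof.
move=> c0 mA hA hc.
have [S0|nS0] := eqVneq S set0.
  have -> : A = set0 by apply/seteqP; split => // w /hA; rewrite S0.
  by rewrite measure0 lee_fin.
have nS0' : S !=set0 by apply/set0P.
have [hs|nhs] := pselect (has_sup S); last first.
  have hS := (has_supPn nS0').1 nhs.
  apply: (@union_bound (fun n => n%:R)) => //.
  - by move=> n m nm; rewrite ler_nat.
  - move=> w _; exists (Num.bound `|f w|) => //=.
    exact/ltW/(le_lt_trans (ler_norm _) (archi_boundP (normr_ge0 _))).
  - move=> n; have [y Sy ny] := hS n%:R.
    apply: le_trans (hc _ Sy).
    apply: le_measure; rewrite ?inE; [exact: mle|exact: mle|].
    by move=> w /= fw; apply: le_trans fw (ltW ny).
set s := sup S.
have ub : forall x, S x -> x <= s by move=> x Sx; exact: sup_upper_bound.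
have [Ss|nSs] := pselect (S s).
  apply: le_trans (hc _ Ss).
  apply: le_measure; rewrite ?inE //; first exact: mle.
  by move=> w /hA /ub.
apply: (@union_bound (fun n => s - (n.+1%:R)^-1)) => //.
- move=> n m nm; rewrite lerD2l lerN2 lef_pV2 ?posrE ?ltr0n // ler_nat.
  by rewrite ltnS.
- move=> w /hA Sfw; have lt : f w < s.
    by rewrite lt_neqAle ub // andbT; apply/eqP => e; apply: nSs; rewrite -e.
  have p : 0 < s - f w by rewrite subr_gt0.
  exists (Num.bound (s - f w)^-1) => //=.
  have h1 : (Num.bound (s - f w)^-1).+1%:R^-1 < s - f w.
    rewrite -[X in _ < X](invrK (s - f w)) ltf_pV2 ?posrE ?ltr0n ?invr_gt0 //.
    apply: lt_trans (archi_boundP _) _; first by rewrite invr_ge0 ltW.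
    by rewrite ltr_nat.
  by rewrite lerBrDr -lerBrDl ltW.
- move=> n; have ep : 0 < (n.+1%:R : R)^-1 by rewrite invr_gt0 ltr0n.
  have [e Se ne] := sup_adherent ep hs.
  apply: le_trans (hc _ Se).
  apply: le_measure; rewrite ?inE; [exact: mle|exact: mle|].
  by move=> w /= fw; apply: le_trans fw (ltW ne).
Qed.
End K.

Theorem theorem7 (d : measure_display) (T : measurableType d) (R : realType)
  (Theta : set R) (P : R -> probability T R) (phi : T -> R)
  (F G : R -> R -> R) (L U : R -> R -> R) (delta : R) :
  measurable_fun setT phi ->
  (* (i) *)
  (forall z, z \in range phi -> forall a b, z <= a -> a <= b -> F z b <= F z a) ->
  (* (ii) *)
  (forall z, z \in range phi -> forall a b, a <= b -> b <= z -> G z a <= G z b) ->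
  (* (iii) *)
  (forall th, th \in Theta -> forall z, z <= th ->
     (P th [set w | (phi w <= z)%R] <= (F z th)%:E)%E) ->
  (forall th, th \in Theta -> forall z, th <= z ->
     (P th [set w | (z <= phi w)%R] <= (G z th)%:E)%E) ->
  0 < delta < 1 ->
  measurable_fun setT (fun z => L z delta) ->
  measurable_fun setT (fun z => U z delta) ->
  (* the sure event *)
  (forall w, [/\ F (phi w) (U (phi w) delta) <= delta / 2,
                 G (phi w) (L (phi w) delta) <= delta / 2 &
                 L (phi w) delta <= phi w <= U (phi w) delta]) ->
  forall th, th \in Theta ->
    ((1 - delta)%:E <=
      P th [set w | (L (phi w) delta <= th <= U (phi w) delta)%R])%E.

Proof.
move=> mphi hi hii hiii hiv /andP[d0 d1] mL mU sure th Th.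
set mu := P th.
have mLp : measurable_fun setT (fun w => L (phi w) delta).
  exact: (measurableT_comp mL mphi).
have mUp : measurable_fun setT (fun w => U (phi w) delta).
  exact: (measurableT_comp mU mphi).
set E := [set w | (L (phi w) delta <= th <= U (phi w) delta)%R].
set A1 := [set w | U (phi w) delta < th].
set A2 := [set w | th < L (phi w) delta].
have mA1 : measurable A1.
  have -> : A1 = ~` [set w | th <= U (phi w) delta].
    by apply/seteqP; split => w; rewrite /A1 /A2 /= ?ltNge => /negP.
  by apply: measurableC; apply: mge.
have mA2 : measurable A2.
  have -> : A2 = ~` [set w | L (phi w) delta <= th].
    by apply/seteqP; split => w; rewrite /A1 /A2 /= ?ltNge => /negP.
  by apply: measurableC; apply: mle.
have CE : ~` E = A1 `|` A2.
  apply/seteqP; split => w /=.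
    move/negP; rewrite negb_and -!ltNge => /orP[h|h]; by [right|left].
  by move=> [h|h]; apply/negP; rewrite negb_and -!ltNge h ?orbT.
have mCE : measurable (~` E) by rewrite CE; exact: measurableU.
have d2 : 0 <= delta / 2 by rewrite divr_ge0 // ltW.
have b1 : (mu A1 <= (delta / 2)%:E)%E.
  apply: (@key _ _ _ mu phi mphi
    [set z | z \in range phi /\ z <= th /\ F z th <= delta / 2]) => //.
  - move=> w /= hw; have [hF hG /andP[hL hU]] := sure w.
    split; first by apply/mem_set; exists w.
    split; first exact: (le_trans hU (ltW hw)).
    apply: le_trans hF; apply: hi => //; first by apply/mem_set; exists w.
    exact: ltW.
  - move=> z [_ [zth hF]]; apply: le_trans (hiii _ Th _ zth) _.
    by rewrite lee_fin.
have b2 : (mu A2 <= (delta / 2)%:E)%E.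
  apply: (@key _ _ _ mu (fun w => - phi w) (measurable_realfun.measurable_funN mphi)
    [set z | - z \in range phi /\ th <= - z /\ G (- z) th <= delta / 2]) => //.
  - move=> w /= hw; have [hF hG /andP[hL hU]] := sure w.
    rewrite opprK; split; first by apply/mem_set; exists w.
    split; first exact: (le_trans (ltW hw) hL).
    apply: le_trans hG; apply: hii => //; first by apply/mem_set; exists w.
    exact: ltW.
  - move=> z [_ [zth hG]].
    have -> : [set w | (- phi w <= z)%R] = [set w | (- z <= phi w)%R].
      by apply/seteqP; split => w /=; rewrite lerNl.
    apply: le_trans (hiv _ Th _ zth) _.
    by rewrite lee_fin.
have bC : (mu (~` E) <= delta%:E)%E.
  rewrite CE; apply: le_trans (measureU2 _ mA1 mA2) _.
  apply: le_trans (leeD b1 b2) _.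
  by rewrite -EFinD lee_fin -splitr.
rewrite -[E]setCK probability_setC //.
have fin : mu (~` E) \is a fin_num by rewrite fin_num_measure.
rewrite -(fineK fin) in bC *.
rewrite -EFinB lee_fin; rewrite lee_fin in bC.
by rewrite lerB.
Qed.
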